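(* Let $\Gamma$ be a finitely generated group acting by permutations on a countable set $X$, and $w:X\to(0,\infty)$ balanced. If there exists a $w$-compression system, then there is no $w$-invariant mean on $X$.
   Context: $w$ is balanced: for every $g\in\Gamma$, $x\mapsto w(gx)/w(x)$ is bounded on $X$. A $w$-compression system is a finite set $T\subset\Gamma$ together with bounded nonnegative functions $\Psi_g:X\to\mathbb{R}$ ($g\in T$) such that for every $x\in X$: $\sum_{g\in T}\Psi_g(x)=1$ and $\sum_{g\in T}\Psi_g(g^{-1}x)\frac{w(g^{-1}x)}{w(x)}<\frac12$. A mean on $X$ is a finitely additive probability measure on all subsets of $X$ (extended to $\ell^\infty(X)$); it is $w$-invariant if $\mu(gA)=\int_A\frac{w(gx)}{w(x)}\,d\mu(x)$ for all $g\in\Gamma$, $A\subseteq X$. *)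

(* Defs.v *)
From Stdlib Require Import Reals List ClassicalEpsilon.
Open Scope R_scope.

Section Defs.
Context {G X : Type}.

Definition is_group (mul : G -> G -> G) (inv : G -> G) (e : G) : Prop :=
  (forall a b c, mul a (mul b c) = mul (mul a b) c) /\
  (forall a, mul e a = a) /\ (forall a, mul a e = a) /\
  (forall a, mul (inv a) a = e) /\ (forall a, mul a (inv a) = e).

Inductive generated (mul : G -> G -> G) (inv : G -> G) (e : G) (S : list G)
  : G -> Prop :=
| gen_e : generated mul inv e S e
| gen_s : forall s, In s S -> generated mul inv e S s
| gen_mul : forall a b, generated mul inv e S a -> generated mul inv e S b ->
    generated mul inv e S (mul a b)
| gen_inv : forall a, generated mul inv e S a -> generated mul inv e S (inv a).

Definition finitely_generated (mul : G -> G -> G) (inv : G -> G) (e : G) : Prop :=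
  exists S : list G, forall g, generated mul inv e S g.

(* left action of G on X (each act g is then a permutation of X) *)
Definition is_action (mul : G -> G -> G) (e : G) (act : G -> X -> X) : Prop :=
  (forall x, act e x = x) /\
  (forall g h x, act (mul g h) x = act g (act h x)).

Definition countable_type (T : Type) : Prop :=
  exists f : T -> nat, forall a b, f a = f b -> a = b.

Definition bounded (f : X -> R) : Prop := exists M, forall x, Rabs (f x) <= M.

Definition balanced (act : G -> X -> X) (w : X -> R) : Prop :=
  forall g, bounded (fun x => w (act g x) / w x).

Definition sum_list (T : list G) (f : G -> R) : R :=
  fold_right (fun g acc => f g + acc) 0 T.

Definition compression_system (inv : G -> G) (act : G -> X -> X) (w : X -> R)
  (T : list G) (Psi : G -> X -> R) : Prop :=
  NoDup T /\
  (forall g, In g T -> bounded (Psi g) /\ (forall x, 0 <= Psi g x)) /\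
  (forall x,
     sum_list T (fun g => Psi g x) = 1 /\
     sum_list T (fun g => Psi g (act (inv g) x) * (w (act (inv g) x) / w x)) < 1/2).

Definition has_compression_system (inv : G -> G) (act : G -> X -> X)
  (w : X -> R) : Prop :=
  exists (T : list G) (Psi : G -> X -> R), compression_system inv act w T Psi.

Definition indicator (A : X -> Prop) (x : X) : R :=
  if excluded_middle_informative (A x) then 1 else 0.

Definition image_set (act : G -> X -> X) (g : G) (A : X -> Prop) : X -> Prop :=
  fun y => exists x, A x /\ y = act g x.

(* A mean on X, presented as its (unique) extension to l^infty(X): a positive,
   normalized linear functional on bounded functions.  mu(A) = m (indicator A),
   int_A f dmu = m (indicator A * f). *)
Definition is_mean (m : (X -> R) -> R) : Prop :=
  (forall f g, bounded f -> bounded g -> m (fun x => f x + g x) = m f + m g) /\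
  (forall c f, bounded f -> m (fun x => c * f x) = c * m f) /\
  (forall f, bounded f -> (forall x, 0 <= f x) -> 0 <= m f) /\
  m (fun _ => 1) = 1.

Definition w_invariant (act : G -> X -> X) (w : X -> R) (m : (X -> R) -> R) : Prop :=
  forall (g : G) (A : X -> Prop),
    m (indicator (image_set act g A)) =
    m (fun x => indicator A x * (w (act g x) / w x)).

End Defs.

(* Main.v *)
From Pilot Require Import Defs.
From Stdlib Require Import Reals List ClassicalEpsilon Lra FunctionalExtensionality.
Open Scope R_scope.
Import Pilot.Defs.

Section Aux.
Context {X : Type}.

Lemma bnd_const (c : R) : @bounded X (fun _ => c).
Proof. exists (Rabs c); intros; lra. Qed.
Lemma bnd_plus (f g : X -> R) : bounded f -> bounded g -> bounded (fun x => f x + g x).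
Proof. intros [M HM] [N HN]; exists (M+N); intro x.
 eapply Rle_trans; [apply Rabs_triang|]. specialize (HM x); specialize (HN x); lra. Qed.
Lemma bnd_mul (f g : X -> R) : bounded f -> bounded g -> bounded (fun x => f x * g x).
Proof. intros [M HM] [N HN]; exists (M*N); intro x. rewrite Rabs_mult.
 apply Rmult_le_compat; try apply Rabs_pos; auto. Qed.
Lemma bnd_ind (A : X -> Prop) : bounded (indicator A).
Proof. exists 1; intro x; unfold indicator; destruct excluded_middle_informative;
  rewrite ?Rabs_R1, ?Rabs_R0; lra. Qed.

Lemma bnd_minus (f g : X -> R) : bounded f -> bounded g -> bounded (fun x => f x - g x).
Proof. intros [M HM] [N HN]; exists (M+N); intro x. unfold Rminus.
 eapply Rle_trans; [apply Rabs_triang|]. rewrite Rabs_Ropp. specialize (HM x); specialize (HN x); lra. Qed.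

Variable m : (X -> R) -> R.
Hypothesis Hm : is_mean m.

Lemma m_add f g : bounded f -> bounded g -> m (fun x => f x + g x) = m f + m g.
Proof. destruct Hm as (H&_); auto. Qed.
Lemma m_scal c f : bounded f -> m (fun x => c * f x) = c * m f.
Proof. destruct Hm as (_&H&_); auto. Qed.

Lemma m_const c : m (fun _ => c) = c.
Proof. destruct Hm as (_&Hs&_&H1).
 pose proof (Hs c (fun _ => 1) (bnd_const 1)) as H. simpl in H.
 replace (fun _ : X => c) with (fun _ : X => c * 1) by (extensionality x; ring).
 rewrite H, H1; ring. Qed.

Lemma m_sub f g : bounded f -> bounded g -> m (fun x => f x - g x) = m f - m g.
Proof. intros Hf Hg.
 assert (Hfg : bounded (fun x => f x - g x)).
 { replace (fun x => f x - g x) with (fun x => f x + (-1) * g x) by (extensionality x; ring).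
   apply bnd_plus; auto. apply bnd_mul; auto. apply bnd_const. }
 assert (E : m f = m (fun x => (f x - g x) + g x)).
 { f_equal. extensionality x; ring. }
 rewrite E, m_add; auto. ring. Qed.

Lemma m_mono f g : bounded f -> bounded g -> (forall x, f x <= g x) -> m f <= m g.
Proof. intros Hf Hg Hle. destruct Hm as (_&_&Hp&_).
 assert (0 <= m (fun x => g x - f x)).
 { apply Hp. replace (fun x => g x - f x) with (fun x => g x + (-1) * f x) by (extensionality x; ring).
   apply bnd_plus; auto. apply bnd_mul; auto. apply bnd_const.
   intro x; specialize (Hle x); lra. }
 rewrite m_sub in H; auto. lra. Qed.

Fixpoint FnF (d : R) (f : X -> R) (n : nat) (x : X) : R :=
  match n with O => 0 | S k => FnF d f k x + d * indicator (fun y => INR (S k) * d < f y) x end.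

Lemma bnd_FnF d f n : bounded (FnF d f n).
Proof. induction n; simpl. apply bnd_const.
 apply bnd_plus; auto. apply bnd_mul. apply bnd_const. apply bnd_ind. Qed.

Lemma FnF_bounds d f n x : 0 < d -> 0 <= f x ->
  FnF d f n x <= f x /\ Rmin (f x - d) (INR n * d) <= FnF d f n x /\ FnF d f n x <= INR n * d.
Proof. intros Hd Hf. induction n.
 - simpl FnF. simpl INR. rewrite Rmult_0_l. unfold Rmin; destruct Rle_dec; lra.
 - change (FnF d f (S n) x) with (FnF d f n x + d * indicator (fun y => INR (S n) * d < f y) x).
   assert (hS : INR (S n) * d = INR n * d + d) by (rewrite S_INR; ring).
   unfold indicator; destruct excluded_middle_informative as [h|h]; rewrite hS in *;
   destruct IHn as (I1&I2&I3); unfold Rmin in *; repeat destruct Rle_dec; lra.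
Qed.

End Aux.

Section Sums.
Context {G X : Type}.
Variable m : (X -> R) -> R.
Hypothesis Hm : is_mean m.

Lemma m_sum (F : G -> X -> R) T : (forall g, In g T -> bounded (F g)) ->
  bounded (fun x => sum_list T (fun g => F g x)) /\
  m (fun x => sum_list T (fun g => F g x)) = sum_list T (fun g => m (F g)).
Proof. induction T as [|a T IH]; intro HB; simpl.
 - split. apply bnd_const. apply m_const; auto.
 - destruct IH as [B E]. intros; apply HB; simpl; auto.
   split. apply bnd_plus; auto. apply HB; simpl; auto.
   rewrite (m_add m Hm); auto. rewrite E; auto. apply HB; simpl; auto.
Qed.

Lemma sum_list_ext T (f1 f2 : G -> R) : (forall g, In g T -> f1 g = f2 g) ->
  sum_list T f1 = sum_list T f2.
Proof. induction T; simpl; intros; auto. rewrite H, IHT; auto. Qed.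

Variables (mul : G -> G -> G) (inv : G -> G) (e : G) (act : G -> X -> X) (w : X -> R).
Hypothesis HG : is_group mul inv e.
Hypothesis Hact : is_action mul e act.
Hypothesis Hwpos : forall x, 0 < w x.
Hypothesis Hbal : balanced act w.
Hypothesis Hinv : w_invariant act w m.

Lemma act_inv_l g y : act (inv g) (act g y) = y.
Proof. destruct HG as (_&_&_&Hl&_); destruct Hact as (H1&H2).
 rewrite <- H2, Hl, H1; auto. Qed.
Lemma act_inv_r g y : act g (act (inv g) y) = y.
Proof. destruct HG as (_&_&_&_&Hr); destruct Hact as (H1&H2).
 rewrite <- H2, Hr, H1; auto. Qed.

Lemma comp_image g A : (fun x => indicator A (act g x)) = indicator (image_set act (inv g) A).
Proof. extensionality y; unfold indicator, image_set.
 destruct (excluded_middle_informative (A (act g y))) as [h|h];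
 destruct (excluded_middle_informative (exists x, A x /\ y = act (inv g) x)) as [[x [hx E]]|h']; auto.
 - exfalso; apply h'; exists (act g y); split; auto. rewrite act_inv_l; auto.
 - exfalso; apply h. rewrite E, act_inv_r; auto.
Qed.

Lemma FnF_inv d f n g :
  m (fun x => FnF d f n (act g x)) = m (fun x => FnF d f n x * (w (act (inv g) x) / w x)).
Proof.
 assert (Hr : bounded (fun x => w (act (inv g) x) / w x)) by apply Hbal.
 induction n.
 - simpl. replace (fun x : X => 0 * (w (act (inv g) x) / w x)) with (fun _ : X => 0)
     by (extensionality x; ring). reflexivity.
 - set (A := fun y => INR (S n) * d < f y).
   change (m (fun x => FnF d f n (act g x) + d * indicator A (act g x)) =
     m (fun x => (FnF d f n x + d * indicator A x) * (w (act (inv g) x) / w x))).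
   rewrite (m_add m Hm (fun x => FnF d f n (act g x)) (fun x => d * indicator A (act g x))).
   2:{ destruct (bnd_FnF d f n) as [M HM]; exists M; auto. }
   2:{ apply bnd_mul. apply bnd_const. destruct (bnd_ind A) as [M HM]; exists M; auto. }
   rewrite IHn.
   replace (fun x => (FnF d f n x + d * indicator A x) * (w (act (inv g) x) / w x))
     with (fun x => FnF d f n x * (w (act (inv g) x) / w x) + d * (indicator A x * (w (act (inv g) x) / w x)))
     by (extensionality x; ring).
   rewrite (m_add m Hm (fun x => FnF d f n x * (w (act (inv g) x) / w x)) (fun x => d * (indicator A x * (w (act (inv g) x) / w x)))).
   2:{ apply bnd_mul; auto. apply bnd_FnF. }
   2:{ apply bnd_mul. apply bnd_const. apply bnd_mul; auto. apply bnd_ind. }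
   f_equal.
   rewrite (m_scal m Hm d (fun x => indicator A (act g x))).
   2:{ destruct (bnd_ind A) as [M HM]; exists M; auto. }
   rewrite (m_scal m Hm d (fun x => indicator A x * (w (act (inv g) x) / w x))).
   2:{ apply bnd_mul; auto. apply bnd_ind. }
   f_equal. rewrite comp_image. apply Hinv.
Qed.

Lemma inv_ext g f : bounded f -> (forall x, 0 <= f x) ->
  m (fun x => f (act g x)) = m (fun x => f x * (w (act (inv g) x) / w x)).
Proof.
 intros Hfb Hf0.
 assert (Hr : bounded (fun x => w (act (inv g) x) / w x)) by apply Hbal.
 destruct Hr as [K0 HK].
 set (K := Rabs K0).
 assert (HK0 : 0 <= K) by apply Rabs_pos.
 assert (Hr0 : forall x, 0 <= w (act (inv g) x) / w x).
 { intro x. apply Rlt_le, Rdiv_lt_0_compat; auto. }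
 assert (HrK : forall x, w (act (inv g) x) / w x <= K).
 { intro x. specialize (HK x). specialize (Hr0 x). rewrite Rabs_pos_eq in HK; auto.
   unfold K; eapply Rle_trans; [exact HK| apply RRle_abs]. }
 destruct Hfb as [B HB].
 set (m1 := m (fun x => f (act g x))).
 set (m2 := m (fun x => f x * (w (act (inv g) x) / w x))).
 assert (key : forall d, 0 < d -> Rabs (m1 - m2) <= d * (1 + K)).
 { intros d Hd.
   destruct (INR_archimed d B) as [n Hn]; [lra|].
   assert (Hpt : forall y, 0 <= f y - FnF d f n y <= d).
   { intro y. destruct (FnF_bounds d f n y Hd (Hf0 y)) as (I1&I2&I3).
     specialize (HB y). rewrite Rabs_pos_eq in HB by auto.
     unfold Rmin in I2; destruct Rle_dec; lra. }
   assert (Hfb : bounded f) by (exists B; auto).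
   assert (Hrb : bounded (fun x => w (act (inv g) x) / w x)) by (exists K0; auto).
   assert (Hcb : forall (h : X -> R), bounded h -> bounded (fun x => h (act g x))).
   { intros h [M HM]; exists M; auto. }
   assert (H3 := FnF_inv d f n g).
   assert (H1 : 0 <= m1 - m (fun x => FnF d f n (act g x)) <= d).
   { unfold m1. rewrite <- (m_sub m Hm) by (apply Hcb; auto; apply bnd_FnF).
     split.
     - apply Rle_trans with (m (fun _ => 0)); [ rewrite (m_const m Hm 0); lra | ]. apply (m_mono m Hm). apply bnd_const.
       apply (bnd_minus _ _ (Hcb _ Hfb)). apply Hcb, bnd_FnF.
       intro x; apply Hpt.
     - apply Rle_trans with (m (fun _ => d)); [ | rewrite (m_const m Hm d); lra]. apply (m_mono m Hm).
       apply (bnd_minus _ _ (Hcb _ Hfb)). apply Hcb, bnd_FnF.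
       apply bnd_const. intro x; apply Hpt. }
   assert (H2 : 0 <= m2 - m (fun x => FnF d f n x * (w (act (inv g) x) / w x)) <= d * K).
   { unfold m2. rewrite <- (m_sub m Hm) by (apply bnd_mul; auto; apply bnd_FnF).
     assert (Hb : bounded (fun x => f x * (w (act (inv g) x) / w x) - FnF d f n x * (w (act (inv g) x) / w x))).
     { apply bnd_minus; apply bnd_mul; auto. apply bnd_FnF. }
     assert (Hp : forall x, 0 <= f x * (w (act (inv g) x) / w x) - FnF d f n x * (w (act (inv g) x) / w x) <= d * K).
     { intro x. rewrite <- Rmult_minus_distr_r. specialize (Hpt x). split.
       apply Rmult_le_pos; try lra; auto. apply Rmult_le_compat; try lra; auto. }
     split.
     - apply Rle_trans with (m (fun _ => 0)); [ rewrite (m_const m Hm 0); lra | ]. apply (m_mono m Hm); auto. apply bnd_const. apply Hp.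
     - apply Rle_trans with (m (fun _ => d * K)); [ | rewrite (m_const m Hm (d*K)); lra]. apply (m_mono m Hm); auto. apply bnd_const. apply Hp. }
   rewrite H3 in H1. unfold Rabs; destruct Rcase_abs; lra. }
 destruct (Req_dec m1 m2) as [E|E]; auto. exfalso.
 assert (Hpos : 0 < Rabs (m1 - m2)) by (apply Rabs_pos_lt; lra).
 specialize (key (Rabs (m1 - m2) / (2 * (1 + K)))).
 assert (Heq : Rabs (m1 - m2) / (2 * (1 + K)) * (1 + K) = Rabs (m1 - m2) / 2) by (field; lra).
 rewrite Heq in key. assert (0 < Rabs (m1 - m2) / (2 * (1 + K))).
 { apply Rdiv_lt_0_compat; lra. }
 specialize (key H). lra.
Qed.
End Sums.

Theorem proposition2p2
  (G X : Type) (mul : G -> G -> G) (inv : G -> G) (e : G) (act : G -> X -> X)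
  (w : X -> R)
  (HG : is_group mul inv e) (Hfg : finitely_generated mul inv e)
  (Hact : is_action mul e act) (HX : countable_type X)
  (Hwpos : forall x, 0 < w x) (Hbal : balanced act w)
  (Hcomp : has_compression_system inv act w) :
  ~ (exists m : (X -> R) -> R, is_mean m /\ w_invariant act w m).
Proof.
  intros [m [Hm Hinv]].
  destruct Hcomp as (T & Psi & HND & HPsi & Hx).
  set (h := fun g x => Psi g (act (inv g) x) * (w (act (inv g) x) / w x)).
  assert (HbP : forall g, In g T -> bounded (Psi g)) by (intros g Hg; apply HPsi; auto).
  assert (Hbh : forall g, In g T -> bounded (h g)).
  { intros g Hg. unfold h. apply bnd_mul. destruct (HbP g Hg) as [M HM]; exists M; auto.
    apply Hbal. }
  assert (Hmh : forall g, In g T -> m (h g) = m (Psi g)).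
  { intros g Hg.
    pose proof (inv_ext m Hm mul inv e act w HG Hact Hwpos Hbal Hinv g
                  (fun y => Psi g (act (inv g) y))) as E.
    cbv beta in E.
    replace (fun x => Psi g (act (inv g) (act g x))) with (Psi g) in E.
    2:{ extensionality x. rewrite (act_inv_l mul inv e act HG Hact). reflexivity. }
    rewrite E. reflexivity.
    destruct (HbP g Hg) as [M HM]; exists M; auto.
    intro x; apply HPsi; auto. }
  destruct (m_sum m Hm Psi T HbP) as [B1 E1].
  destruct (m_sum m Hm h T Hbh) as [B2 E2].
  assert (F1 : (fun x => sum_list T (fun g => Psi g x)) = (fun _ => 1)).
  { extensionality x. apply Hx. }
  rewrite F1, (m_const m Hm) in E1.
  rewrite (sum_list_ext T (fun g => m (Psi g)) (fun g => m (h g))) in E1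
    by (intros; symmetry; auto).
  rewrite <- E2 in E1.
  assert (Hle : m (fun x => sum_list T (fun g => h g x)) <= m (fun _ => 1/2)).
  { apply (m_mono m Hm); auto. apply bnd_const. intro x.
    destruct (Hx x) as [_ Hl]. unfold h. lra. }
  rewrite (m_const m Hm) in Hle. lra.
Qed.
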